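(* Let $\mathcal H$ be a Hopf algebra over a commutative ring $k$ with bijective antipode $S$, and let $C$ be a left $\mathcal H$-module coalgebra. Then the map on the $k$-module $C\otimes \mathcal H$ $$\Delta(a\otimes g)=\big(a^{(0)}\otimes g^{(1)}\big)\otimes\big(S^{-1}(g^{(0)}S(g^{(2)}))\cdot a^{(1)}\otimes g^{(3)}\big)$$ is a coassociative comultiplication with counit $\epsilon_C\otimes\epsilon_{\mathcal H}$. The resulting coalgebra is denoted $C>\!\!\blacktriangleleft\mathcal H$.
   Context: Sweedler notation: for a coalgebra element $c$, $\Delta c=c^{(0)}\otimes c^{(1)}$, $\Delta^n c=c^{(0)}\otimes\cdots\otimes c^{(n)}$ (summation understood); same notation in $\mathcal H$. A left $\mathcal H$-module coalgebra is a coalgebra $(C,\Delta,\epsilon_C)$ which is a left $\mathcal H$-module, $h\otimes c\mapsto h\cdot c$, such that $\Delta(h\cdot c)=h^{(0)}\cdot c^{(0)}\otimes h^{(1)}\cdot c^{(1)}$ and $\epsilon_C(h\cdot c)=\epsilon(h)\epsilon_C(c)$. *)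

(* Defs.v *)
From mathcomp Require Import all_boot all_algebra.
Set Implicit Arguments. Unset Strict Implicit. Unset Printing Implicit Defensive.
Import GRing.Theory.
Local Open Scope ring_scope.

(* An element of M1 (x) ... (x) Mn is represented by a finite formal sum of
   pure tensors, i.e. a  seq (M1 * ... * Mn)  (scalars are absorbed into the
   first factor).  Two such representatives denote the same tensor iff they
   have the same image under every R-multilinear map into every R-module W
   (universal property of the tensor product). *)

Section Tensors.
Variable R : comPzRingType.

Definition lin (U V : lmodType R) (f : U -> V) : Prop :=
  forall (a : R) (x y : U), f (a *: x + y) = a *: f x + f y.

Definition bilin (M N W : lmodType R) (f : M -> N -> W) : Prop :=
  (forall n, lin (fun m => f m n)) /\ (forall m, lin (f m)).

Definition trilin (M N P W : lmodType R) (f : M -> N -> P -> W) : Prop :=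
  [/\ forall y z, lin (fun x => f x y z),
      forall x z, lin (fun y => f x y z) &
      forall x y, lin (f x y)].

Definition quadlin (M1 M2 M3 M4 W : lmodType R)
  (f : M1 -> M2 -> M3 -> M4 -> W) : Prop :=
  [/\ forall x2 x3 x4, lin (fun x1 => f x1 x2 x3 x4),
      forall x1 x3 x4, lin (fun x2 => f x1 x2 x3 x4),
      forall x1 x2 x4, lin (fun x3 => f x1 x2 x3 x4) &
      forall x1 x2 x3, lin (fun x4 => f x1 x2 x3 x4)].

Definition hexalin (M1 M2 M3 M4 M5 M6 W : lmodType R)
  (f : M1 -> M2 -> M3 -> M4 -> M5 -> M6 -> W) : Prop :=
  (forall x2 x3 x4 x5 x6, lin (fun x1 => f x1 x2 x3 x4 x5 x6)) /\
  (forall x1 x3 x4 x5 x6, lin (fun x2 => f x1 x2 x3 x4 x5 x6)) /\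
  (forall x1 x2 x4 x5 x6, lin (fun x3 => f x1 x2 x3 x4 x5 x6)) /\
  (forall x1 x2 x3 x5 x6, lin (fun x4 => f x1 x2 x3 x4 x5 x6)) /\
  (forall x1 x2 x3 x4 x6, lin (fun x5 => f x1 x2 x3 x4 x5 x6)) /\
  (forall x1 x2 x3 x4 x5, lin (fun x6 => f x1 x2 x3 x4 x5 x6)).

Definition eqT2 (M N : lmodType R) (s t : seq (M * N)) : Prop :=
  forall (W : lmodType R) (f : M -> N -> W), bilin f ->
    \sum_(x <- s) f x.1 x.2 = \sum_(x <- t) f x.1 x.2.

Definition eqT3 (M N P : lmodType R) (s t : seq (M * N * P)) : Prop :=
  forall (W : lmodType R) (f : M -> N -> P -> W), trilin f ->
    \sum_(x <- s) f x.1.1 x.1.2 x.2 = \sum_(x <- t) f x.1.1 x.1.2 x.2.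

Definition eqT4 (M1 M2 M3 M4 : lmodType R) (s t : seq (M1 * M2 * M3 * M4)) : Prop :=
  forall (W : lmodType R) (f : M1 -> M2 -> M3 -> M4 -> W), quadlin f ->
    \sum_(x <- s) f x.1.1.1 x.1.1.2 x.1.2 x.2
    = \sum_(x <- t) f x.1.1.1 x.1.1.2 x.1.2 x.2.

Definition eqT6 (M1 M2 M3 M4 M5 M6 : lmodType R)
  (s t : seq (M1 * M2 * M3 * M4 * M5 * M6)) : Prop :=
  forall (W : lmodType R) (f : M1 -> M2 -> M3 -> M4 -> M5 -> M6 -> W), hexalin f ->
    \sum_(x <- s) f x.1.1.1.1.1 x.1.1.1.1.2 x.1.1.1.2 x.1.1.2 x.1.2 x.2
    = \sum_(x <- t) f x.1.1.1.1.1 x.1.1.1.1.2 x.1.1.1.2 x.1.1.2 x.1.2 x.2.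

(* A coalgebra structure (Delta, eps) on the R-module C.  Delta c is a
   representative of the tensor c^(0) (x) c^(1) in C (x) C. *)
Definition is_coalgebra (C : lmodType R) (D : C -> seq (C * C)) (e : C -> R) : Prop :=
  [/\
      forall (a : R) (x y : C),
        eqT2 (D (a *: x + y)) ([seq (a *: p.1, p.2) | p <- D x] ++ D y),
      forall (a : R) (x y : C), e (a *: x + y) = a * e x + e y,
      forall c : C,
        eqT3 (flatten [seq [seq (q.1, q.2, p.2) | q <- D p.1] | p <- D c])
             (flatten [seq [seq (p.1, q.1, q.2) | q <- D p.2] | p <- D c]),
      forall c : C, \sum_(p <- D c) e p.1 *: p.2 = c &
      forall c : C, \sum_(p <- D c) e p.2 *: p.1 = c].

Definition is_Hopf_algebra (H : algType R) (D : H -> seq (H * H)) (e : H -> R)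
  (S : H -> H) : Prop :=
  is_coalgebra D e /\
  (forall g h : H, eqT2 (D (g * h)) [seq (p.1 * q.1, p.2 * q.2) | p <- D g, q <- D h]) /\
  eqT2 (D 1) [:: (1, 1)] /\
  (forall g h : H, e (g * h) = e g * e h) /\
  e 1 = 1 /\
  lin S /\
  (forall h : H, \sum_(p <- D h) S p.1 * p.2 = (e h) *: 1
              /\ \sum_(p <- D h) p.1 * S p.2 = (e h) *: 1).

Definition Delta3 (H : lmodType R) (D : H -> seq (H * H)) (h : H) : seq (H * H * H * H) :=
  flatten [seq flatten [seq [seq (p.1, q.1, r.1, r.2) | r <- D q.2] | q <- D p.2]
          | p <- D h].

Definition is_module_coalgebra (H : algType R) (DH : H -> seq (H * H)) (eH : H -> R)
  (C : lmodType R) (DC : C -> seq (C * C)) (eC : C -> R) (act : H -> C -> C) : Prop :=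
  is_coalgebra DC eC /\
  bilin act /\
  (forall c, act 1 c = c) /\
  (forall g h c, act (g * h) c = act g (act h c)) /\
  (forall h c, eqT2 (DC (act h c))
                    [seq (act p.1 q.1, act p.2 q.2) | p <- DH h, q <- DC c]) /\
  (forall h c, eC (act h c) = eH h * eC c).

Definition smash_Delta (H : algType R) (DH : H -> seq (H * H)) (S Sinv : H -> H)
  (C : lmodType R) (DC : C -> seq (C * C)) (act : H -> C -> C) (a : C) (g : H)
  : seq ((C * H) * (C * H)) :=
  [seq ((x.1, q.1.1.2), (act (Sinv (q.1.1.1 * S q.1.2)) x.2, q.2))
  | x <- DC a, q <- Delta3 DH g].

Definition flat4 (C H : Type) (p : (C * H) * (C * H)) : C * H * C * H :=
  (p.1.1, p.1.2, p.2.1, p.2.2).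

End Tensors.

(* Main.v *)
Require Import Defs.
From mathcomp Require Import all_boot all_algebra.
From mathcomp Require Import zify.
Import GRing.Theory.
Local Open Scope ring_scope.
Set Implicit Arguments. Unset Strict Implicit. Unset Printing Implicit Defensive.


Section Lin.
Variable R : comPzRingType.
Implicit Types U V W : lmodType R.

Lemma lin0 U V (f : U -> V) : lin f -> f 0 = 0.
Proof. move=> hf; have := hf 1 0 0; rewrite !scale1r addr0 => h.
by apply: (addrI (f 0)); rewrite -h addr0. Qed.

Lemma linZ U V (f : U -> V) a x : lin f -> f (a *: x) = a *: f x.
Proof. by move=> hf; rewrite -[a *: x]addr0 hf (lin0 hf) addr0. Qed.

Lemma linD U V (f : U -> V) x y : lin f -> f (x + y) = f x + f y.
Proof. by move=> hf; have := hf 1 x y; rewrite !scale1r. Qed.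

Lemma lin_sum_push U V (f : U -> V) I (r : seq I) (F : I -> U) : lin f ->
  f (\sum_(i <- r) F i) = \sum_(i <- r) f (F i).
Proof.
move=> hf; elim: r => [|i r IH]; first by rewrite !big_nil (lin0 hf).
by rewrite !big_cons (linD _ _ hf) IH.
Qed.

Lemma lin_id U : lin (fun x : U => x).
Proof. by []. Qed.

Lemma lin_comp U V W (f : V -> W) (g : U -> V) : lin f -> lin g -> lin (fun x => f (g x)).
Proof. by move=> hf hg a x y; rewrite hg hf. Qed.

Lemma lin_sum U V I (r : seq I) (G : I -> U -> V) : (forall i, lin (G i)) ->
  lin (fun x => \sum_(i <- r) G i x).
Proof.
move=> hG a x y; rewrite scaler_sumr -big_split /=.
by apply: eq_bigr => i _; rewrite hG.
Qed.

Lemma lin_scale U V (c : R) (g : U -> V) : lin g -> lin (fun x => c *: g x).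
Proof. by move=> hg a x y; rewrite hg scalerDr !scalerA mulrC. Qed.

Lemma lin_scalel U V (v : V) (g : U -> R) :
  (forall a x y, g (a *: x + y) = a * g x + g y) -> lin (fun x => g x *: v).
Proof. by move=> hg a x y; rewrite hg scalerDl scalerA. Qed.

End Lin.

(* Sweedler sums over a coalgebra *)
Section SDdef.
Variable R : comPzRingType.
Variable M : lmodType R.
Variable D : M -> seq (M * M).
Implicit Types U W V : lmodType R.

Fixpoint SD (W : lmodType R) (n : nat) (m : M) (F : seq M -> W) : W :=
  if n is n'.+1 then \sum_(p <- D m) SD n' p.2 (fun s => F (p.1 :: s)) else F [:: m].

Definition mlin (W : lmodType R) n (F : seq M -> W) :=
  forall l r, (size l + size r)%N = n -> lin (fun x => F (l ++ x :: r)).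

Lemma SD_S W n m (F : seq M -> W) :
  SD n.+1 m F = \sum_(p <- D m) SD n p.2 (fun s => F (p.1 :: s)).
Proof. by []. Qed.

Lemma SD_0 W m (F : seq M -> W) : SD 0 m F = F [:: m].
Proof. by []. Qed.

Lemma SD1E W m (F : seq M -> W) : SD 1 m F = \sum_(p <- D m) F [:: p.1; p.2].
Proof. by []. Qed.

Lemma SD_ext W n m (F G : seq M -> W) :
  (forall s, size s = n.+1 -> F s = G s) -> SD n m F = SD n m G.
Proof.
elim: n m F G => [|n IH] m F G h /=; first by apply: h.
apply: eq_bigr => p _; apply: IH => s hs; apply: h => /=; by rewrite hs.
Qed.

Lemma SD_map W V n m (F : seq M -> W) (f : W -> V) : lin f ->
  SD n m (fun s => f (F s)) = f (SD n m F).
Proof.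
move=> hf; elim: n m F => [|n IH] m F //=.
rewrite (lin_sum_push _ _ hf); apply: eq_bigr => p _; by rewrite IH.
Qed.

Lemma SD_sumF W n m I (r : seq I) (F : I -> seq M -> W) :
  SD n m (fun s => \sum_(i <- r) F i s) = \sum_(i <- r) SD n m (F i).
Proof.
elim: n m F => [|n IH] m F //=.
rewrite exchange_big /=; apply: eq_bigr => p _; by rewrite IH.
Qed.

Lemma SD_addF W n m (F G : seq M -> W) :
  SD n m (fun s => F s + G s) = SD n m F + SD n m G.
Proof.
elim: n m F G => [|n IH] m F G //=.
rewrite -big_split; apply: eq_bigr => p _; by rewrite IH.
Qed.

Lemma SD_linf U W n m (F : U -> seq M -> W) :
  (forall s, size s = n.+1 -> lin (fun x => F x s)) -> lin (fun x => SD n m (F x)).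
Proof.
elim: n m F => [|n IH] m F h /=; first by apply: h.
apply: lin_sum => p; apply: IH => s hs; apply: h => /=; by rewrite hs.
Qed.

Lemma mlin_cons W n (F : seq M -> W) y : mlin n.+1 F -> mlin n (fun s => F (y :: s)).
Proof. by move=> h l r hs; apply: (h (y :: l) r) => /=; rewrite addSn hs. Qed.

End SDdef.
Arguments SD : simpl never.

Lemma SD_swap (R : comPzRingType) (M M' W : lmodType R) (D : M -> seq (M * M))
  (D' : M' -> seq (M' * M')) n k m m' (G : seq M -> seq M' -> W) :
  SD D n m (fun s => SD D' k m' (G s)) = SD D' k m' (fun t => SD D n m (fun s => G s t)).
Proof.
elim: n m G => [|n IH] m G; first by rewrite SD_0; apply: SD_ext => t _; rewrite SD_0.
rewrite SD_S; under eq_bigr do rewrite IH.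
rewrite -SD_sumF; apply: SD_ext => t _; by rewrite SD_S.
Qed.


Section Coalg.
Variable R : comPzRingType.
Variable M : lmodType R.
Variable D : M -> seq (M * M).
Variable e : M -> R.
Hypothesis hC : is_coalgebra D e.
Implicit Types U W V : lmodType R.

Lemma linl_scale U V (f : U -> U -> V) a x y : (forall y, lin (fun x => f x y)) ->
  f (a *: x) y = a *: f x y.
Proof. by move=> h; rewrite (linZ _ _ (h y)). Qed.

Lemma D_lin W (G : M -> M -> W) : (forall y, lin (fun x => G x y)) -> (forall x, lin (G x)) ->
  lin (fun m => \sum_(p <- D m) G p.1 p.2).
Proof.
move=> h1 h2 a x y; case: hC => hD _ _ _ _.
rewrite (hD a x y W G) ?big_cat ?big_map //= scaler_sumr; congr (_ + _).
by apply: eq_bigr => p _; rewrite (linl_scale _ _ _ h1).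
Qed.

Lemma SD_lin W n (F : seq M -> W) : mlin n F -> lin (fun m => SD D n m F).
Proof.
elim: n F => [|n IH] F h.
  by move=> a x y; rewrite !SD_0; apply: (h [::] [::]).
move=> a x y; rewrite !SD_S.
apply: (D_lin (G := fun u v => SD D n v (fun s => F (u :: s)))) => [v|u].
  by apply: SD_linf => s hs; apply: (h [::] s) => /=; rewrite hs.
by apply: IH; apply: mlin_cons.
Qed.

Lemma lin_SDm U W n (F : seq M -> W) (g : U -> M) : mlin n F -> lin g ->
  lin (fun x => SD D n (g x) F).
Proof. move=> h hg; exact: (lin_comp (SD_lin h) hg). Qed.

Lemma CA_sum W (G : M -> M -> M -> W) c :
  (forall y z, lin (fun x => G x y z)) -> (forall x z, lin (fun y => G x y z)) ->
  (forall x y, lin (G x y)) ->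
  \sum_(p <- D c) \sum_(q <- D p.1) G q.1 q.2 p.2 =
  \sum_(p <- D c) \sum_(q <- D p.2) G p.1 q.1 q.2.
Proof.
move=> h1 h2 h3; case: hC => _ _ hA _ _.
have := hA c W G; rewrite !big_flatten /= !big_map.
by under eq_bigr do rewrite big_map; under [RHS]eq_bigr do rewrite big_map; apply.
Qed.

Lemma SD_split W n : forall i m (L Rf : seq M -> W), (i <= n)%N -> mlin n.+1 Rf ->
  (forall s, size s = n.+1 -> L s = \sum_(p <- D s`_i) Rf (take i s ++ p.1 :: p.2 :: drop i.+1 s)) ->
  SD D n m L = SD D n.+1 m Rf.
Proof.
elim: n => [|n IH] [|i] m L Rf // hi hR hL.
- by rewrite SD_0 hL // SD1E.
- rewrite SD_S (SD_S _ n.+1).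
  transitivity (\sum_(p <- D m) \sum_(q <- D p.1) SD D n p.2 (fun s => Rf (q.1 :: q.2 :: s))).
    apply: eq_bigr => p _; rewrite -SD_sumF; apply: SD_ext => s hs.
    by rewrite hL /= ?hs // drop0.
  rewrite /=; under [RHS]eq_bigr do rewrite SD_S.
  apply: (@CA_sum W (fun x y z => SD D n z (fun s => Rf (x :: y :: s))) m).
  + move=> y z; apply: SD_linf => s hs; apply: (hR [::] (y :: s)) => /=; by rewrite hs.
  + move=> x z; apply: SD_linf => s hs; apply: (hR [:: x] s) => /=; by rewrite hs.
  + move=> x y; apply: SD_lin; apply: (@mlin_cons _ _ _ _ (fun t => Rf (x :: t))); exact: mlin_cons.
- rewrite SD_S (SD_S _ n.+1); apply: eq_bigr => p _.
  apply: (IH i) => //; first exact: mlin_cons.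
  by move=> s hs; rewrite hL //= hs.
Qed.

Lemma counitL c : \sum_(p <- D c) e p.1 *: p.2 = c.
Proof. by case: hC. Qed.
Lemma counitR c : \sum_(p <- D c) e p.2 *: p.1 = c.
Proof. by case: hC. Qed.
Lemma e_lin a x y : e (a *: x + y) = a * e x + e y.
Proof. by case: hC. Qed.

End Coalg.


Section LinAlg.
Variable R : comPzRingType.
Variable A : algType R.
Lemma lin_mull (U : lmodType R) (g : U -> A) h : lin g -> lin (fun x => g x * h).
Proof. by move=> hg a x y; rewrite hg mulrDl scalerAl. Qed.
Lemma lin_mulr (U : lmodType R) (g : U -> A) h : lin g -> lin (fun x => h * g x).
Proof. by move=> hg a x y; rewrite hg mulrDr scalerAr. Qed.
End LinAlg.

Lemma SD_split1 (R : comPzRingType) (M W : lmodType R) (D : M -> seq (M * M)) e :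
  is_coalgebra D e -> forall n i m (L Rf : seq M -> W), (i <= n)%N -> mlin n.+1 Rf ->
  (forall s, size s = n.+1 -> L s = SD D 1 s`_i (fun t => Rf (take i s ++ t`_0 :: t`_1 :: drop i.+1 s))) ->
  SD D n m L = SD D n.+1 m Rf.
Proof.
move=> hC n i m L Rf hi hR hL; apply: (@SD_split _ _ _ _ hC _ n i m L Rf hi hR) => s hs; by rewrite hL // SD1E.
Qed.

Lemma lin_sum_pushZ (R : comPzRingType) (U V : lmodType R) (f : U -> V) I (r : seq I) (c : I -> R) (F : I -> U) : lin f ->
  \sum_(i <- r) c i *: f (F i) = f (\sum_(i <- r) c i *: F i).
Proof. by move=> hf; rewrite (lin_sum_push _ _ hf); apply: eq_bigr => i _; rewrite (linZ _ _ hf). Qed.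

Ltac lin_solve := cbv beta; solve [ exact: lin_id
  | apply: lin_sum => ?; lin_solve
  | apply: lin_mull; lin_solve
  | apply: lin_mulr; lin_solve
  | apply: SD_linf => ? ?; lin_solve
  | apply: lin_scale; lin_solve
  | match goal with h : _ |- _ => apply: h; solve [mlin_tac | lin_solve] end ]
with mlin_tac := let l := fresh "l" in let r := fresh "r" in let Hs := fresh "Hs" in
  move=> l r Hs; mlin_loop l Hs
with mlin_loop l Hs := case: l Hs => [|? l] Hs;
  [rewrite /=; lin_solve | first [by exfalso; move: Hs => /=; lia | mlin_loop l Hs]].



Lemma e_sum (R : comPzRingType) (M : lmodType R) (D : M -> seq (M * M)) e :
  is_coalgebra D e -> forall I (r : seq I) (F : I -> M), e (\sum_(i <- r) F i) = \sum_(i <- r) e (F i).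
Proof.
move=> hC I r F; have e0 : e 0 = 0.
  have := e_lin hC 1 0 0; rewrite scale1r addr0 mul1r => h.
  by apply: (addrI (e 0)); rewrite -h addr0.
elim: r => [|i r IH]; first by rewrite !big_nil.
rewrite !big_cons; have := e_lin hC 1 (F i) (\sum_(j <- r) F j); rewrite scale1r mul1r => ->; by rewrite IH.
Qed.

Section Hopf.
Variable R : comPzRingType.
Variable H : algType R.
Variables (DH : H -> seq (H * H)) (eH : H -> R) (S : H -> H).
Hypothesis hH : is_Hopf_algebra DH eH S.
Implicit Types U W V : lmodType R.

Let hC : is_coalgebra DH eH := proj1 hH.
Let hmul := proj1 (proj2 hH).
Let hD1 := proj1 (proj2 (proj2 hH)).
Let hemul := proj1 (proj2 (proj2 (proj2 hH))).
Let he1 := proj1 (proj2 (proj2 (proj2 (proj2 hH)))).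
Let hS := proj1 (proj2 (proj2 (proj2 (proj2 (proj2 hH))))).
Let hant := proj2 (proj2 (proj2 (proj2 (proj2 (proj2 hH))))).

Let lS (U : lmodType R) (g : U -> H) : lin g -> lin (fun x => S (g x)) := fun hg => lin_comp hS hg.
Let lSDH := lin_SDm hC.
Let leH (U W : lmodType R) (g : U -> H) (v : W) : lin g -> lin (fun x => eH (g x) *: v).
Proof. move=> hg a x y; rewrite hg (e_lin hC) scalerDl scalerA. by []. Qed.

Lemma mlin1_bilin (W : lmodType R) (F : seq H -> W) : mlin 1 F -> bilin (fun x y => F [:: x; y]).
Proof. by move=> hF; split=> [y|x]; [apply: (hF [::] [:: y]) | apply: (hF [:: x] [::])]. Qed.

Lemma mlin1_0 (W : lmodType R) (F : seq H -> W) : mlin 1 F ->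
  forall (U : lmodType R) (g : U -> H) c, lin g -> lin (fun x => F [:: g x; c]).
Proof. by move=> hF U g c hg; apply: (lin_comp (f := fun y => F [:: y; c]) _ hg); apply: (hF [::] [:: c]). Qed.
Lemma mlin1_1 (W : lmodType R) (F : seq H -> W) : mlin 1 F ->
  forall (U : lmodType R) (g : U -> H) c, lin g -> lin (fun x => F [:: c; g x]).
Proof. by move=> hF U g c hg; apply: (lin_comp (f := fun y => F [:: c; y]) _ hg); apply: (hF [:: c] [::]). Qed.

Lemma SD_mul W (F : seq H -> W) g h : mlin 1 F ->
  SD DH 1 (g * h) F = SD DH 1 g (fun s => SD DH 1 h (fun t => F [:: s`_0 * t`_0; s`_1 * t`_1])).
Proof.
move=> hF; rewrite SD1E (hmul g h (mlin1_bilin hF)) big_allpairs_dep SD1E.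
by apply: eq_bigr => p _; rewrite SD1E.
Qed.

Lemma SD_one W (F : seq H -> W) : mlin 1 F -> SD DH 1 1 F = F [:: 1; 1].
Proof. by move=> hF; rewrite SD1E (hD1 (mlin1_bilin hF)) big_seq1. Qed.

Lemma antL g : SD DH 1 g (fun t => S t`_0 * t`_1) = eH g *: 1.
Proof. by rewrite SD1E; case: (hant g). Qed.
Lemma antR g : SD DH 1 g (fun t => t`_0 * S t`_1) = eH g *: 1.
Proof. by rewrite SD1E; case: (hant g). Qed.

Lemma S1 : S 1 = 1.
Proof.
have := antL 1; rewrite he1 scale1r SD_one ?mulr1 //; mlin_tac.
Qed.


Lemma SD_lin1 W n (F : seq H -> W) : mlin n F -> lin (fun m => SD DH n m F).
Proof. exact: (SD_lin hC). Qed.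

Lemma SD_Santi W (F : seq H -> W) g : mlin 1 F ->
  SD DH 1 (S g) F = SD DH 1 g (fun t => F [:: S t`_1; S t`_0]).
Proof.
move=> hF; have hF0 := mlin1_0 hF; have hF1 := mlin1_1 hF.
pose Z := SD DH 4 g (fun s => SD DH 1 (S s`_0) (fun p => F [:: p`_0 * s`_1 * S s`_4; p`_1 * (s`_2 * S s`_3)])).
have a1 : Z = SD DH 3 g (fun s => SD DH 1 (S s`_0 * s`_1) (fun p => F [:: p`_0 * S s`_3; p`_1 * S s`_2])).
  symmetry; apply: (SD_split1 hC (i := 1)) => //; first mlin_tac.
  case=> [|s0 [|s1 [|s2 [|s3 [|]]]]] //= _.
  rewrite SD_mul; last mlin_tac.
  rewrite SD_swap; apply: SD_ext => t _; apply: SD_ext => p _; by rewrite mulrA.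
have a2 : SD DH 3 g (fun s => SD DH 1 (S s`_0 * s`_1) (fun p => F [:: p`_0 * S s`_3; p`_1 * S s`_2]))
   = SD DH 2 g (fun s => eH s`_0 *: F [:: S s`_2; S s`_1]).
  symmetry; apply: (SD_split1 hC (i := 0)) => //; first mlin_tac.
  case=> [|s0 [|s1 [|s2 [|]]]] //= _.
  have hl : lin (fun y => SD DH 1 y (fun p => F [:: p`_0 * S s2; p`_1 * S s1])).
    by apply: SD_lin1; mlin_tac.
  rewrite (SD_map DH 1 s0 (fun t => S t`_0 * t`_1) hl) antL (linZ _ _ hl) SD_one; last mlin_tac.
  by rewrite /= !mul1r.
have a3 : SD DH 2 g (fun s => eH s`_0 *: F [:: S s`_2; S s`_1])
   = SD DH 1 g (fun t => F [:: S t`_1; S t`_0]).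
  symmetry; apply: (SD_split1 hC (i := 0)) => //; first mlin_tac.
  case=> [|s0 [|s1 [|]]] //= _.
  have hl : lin (fun y => F [:: S s1; S y]) by lin_solve.
  by rewrite SD1E /= (lin_sum_pushZ (DH s0) (fun p => eH p.1) (fun p => p.2) hl) (counitL hC).
have b1 : Z = SD DH 3 g (fun s => eH s`_2 *: SD DH 1 (S s`_0) (fun p => F [:: p`_0 * s`_1 * S s`_3; p`_1])).
  symmetry; apply: (SD_split1 hC (i := 2)) => //; first mlin_tac.
  case=> [|s0 [|s1 [|s2 [|s3 [|]]]]] //= _.
  have hl : lin (fun y => SD DH 1 (S s0) (fun p => F [:: p`_0 * s1 * S s3; p`_1 * y])) by lin_solve.
  rewrite (SD_map DH 1 s2 (fun t => t`_0 * S t`_1) hl) antR (linZ _ _ hl); congr (_ *: _).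
  by apply: SD_ext => p _; rewrite mulr1.
have b2 : SD DH 3 g (fun s => eH s`_2 *: SD DH 1 (S s`_0) (fun p => F [:: p`_0 * s`_1 * S s`_3; p`_1]))
   = SD DH 2 g (fun s => SD DH 1 (S s`_0) (fun p => F [:: p`_0 * s`_1 * S s`_2; p`_1])).
  symmetry; apply: (SD_split1 hC (i := 2)) => //; first mlin_tac.
  case=> [|s0 [|s1 [|s2 [|]]]] //= _.
  have hl : lin (fun y => SD DH 1 (S s0) (fun p => F [:: p`_0 * s1 * S y; p`_1])) by lin_solve.
  by rewrite [RHS]SD1E /= (lin_sum_pushZ (DH s2) (fun p => eH p.1) (fun p => p.2) hl) (counitL hC).
have b3 : SD DH 2 g (fun s => SD DH 1 (S s`_0) (fun p => F [:: p`_0 * s`_1 * S s`_2; p`_1]))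
   = SD DH 1 g (fun s => eH s`_1 *: SD DH 1 (S s`_0) (fun p => F [:: p`_0; p`_1])).
  symmetry; apply: (SD_split1 hC (i := 1)) => //; first mlin_tac.
  case=> [|s0 [|s1 [|]]] //= _.
  have -> : SD DH 1 s1 (fun t => SD DH 1 (S s0) (fun p => F [:: p`_0 * t`_0 * S t`_1; p`_1]))
     = SD DH 1 s1 (fun t => SD DH 1 (S s0) (fun p => F [:: p`_0 * (t`_0 * S t`_1); p`_1])).
    by apply: SD_ext => t _; apply: SD_ext => p _; rewrite mulrA.
  have hl : lin (fun y => SD DH 1 (S s0) (fun p => F [:: p`_0 * y; p`_1])) by lin_solve.
  rewrite (SD_map DH 1 s1 (fun t => t`_0 * S t`_1) hl) antR (linZ _ _ hl); congr (_ *: _).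
  by apply: SD_ext => p _; rewrite mulr1.
have b4 : SD DH 1 g (fun s => eH s`_1 *: SD DH 1 (S s`_0) (fun p => F [:: p`_0; p`_1])) = SD DH 1 (S g) F.
  have hl : lin (fun y => SD DH 1 (S y) (fun p => F [:: p`_0; p`_1])) by lin_solve.
  rewrite SD1E /= (lin_sum_pushZ (DH g) (fun p => eH p.2) (fun p => p.1) hl) (counitR hC).
  by apply: SD_ext => -[|p0 [|p1 [|]]].
by rewrite -b4 -b3 -b2 -b1 a1 a2 a3.
Qed.

Lemma S_mul x y : S (x * y) = S y * S x.
Proof.
pose Z := SD DH 2 x (fun s => SD DH 2 y (fun t => S (s`_0 * t`_0) * (s`_1 * t`_1) * (S t`_2 * S s`_2))).
have a : Z = S y * S x.
  have -> : Z = SD DH 1 x (fun s => SD DH 1 y (fun t => eH (s`_0 * t`_0) *: (S t`_1 * S s`_1))).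
    symmetry; apply: (SD_split1 hC (i := 0)) => //; first mlin_tac.
    case=> [|s0 [|s1 [|]]] //= _.
    rewrite SD_swap; apply: (SD_split1 hC (i := 0)) => //; first mlin_tac.
    case=> [|t0 [|t1 [|]]] //= _.
    rewrite SD_swap.
    rewrite -(@SD_mul _ (fun r => S r`_0 * r`_1 * (S t1 * S s1)) s0 t0); last mlin_tac.
    have hl : lin (fun z => z * (S t1 * S s1)) by lin_solve.
    rewrite (SD_map DH 1 (s0 * t0) (fun r => S r`_0 * r`_1) hl) antL /=.
    by rewrite -scalerAl mul1r.
  have hl1 : lin (fun z => S z) by lin_solve.
  rewrite SD1E /=.
  under eq_bigr => p _.
    rewrite SD1E /=.
    under eq_bigr => q _ do rewrite hemul mulrC -scalerA.
    rewrite (lin_sum_pushZ (f := fun z => eH p.1 *: (S z * S p.2)) (DH y) (fun q => eH q.1) (fun q => q.2)); last by lin_solve.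
    rewrite (counitL hC).
    over.
  rewrite /= (lin_sum_pushZ (f := fun z => S y * S z) (DH x) (fun q => eH q.1) (fun q => q.2)); last by lin_solve.
  by rewrite (counitL hC).
have b : Z = S (x * y).
  transitivity (SD DH 2 x (fun s => S (s`_0 * y) * (s`_1 * S s`_2))).
    apply: SD_ext => s _.
    transitivity (SD DH 1 y (fun t => eH t`_1 *: (S (s`_0 * t`_0) * (s`_1 * S s`_2)))).
      symmetry; apply: (SD_split1 hC (i := 1)) => //; first mlin_tac.
      case=> [|t0 [|t1 [|]]] //= _.
      have -> : SD DH 1 t1 (fun t => S (s`_0 * t0) * (s`_1 * t`_0) * (S t`_1 * S s`_2))
         = SD DH 1 t1 (fun t => S (s`_0 * t0) * (s`_1 * (t`_0 * S t`_1) * S s`_2)).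
        by apply: SD_ext => v _; rewrite !mulrA.
      have hl : lin (fun z => S (s`_0 * t0) * (s`_1 * z * S s`_2)) by lin_solve.
      rewrite (SD_map DH 1 t1 (fun t => t`_0 * S t`_1) hl) antR (linZ _ _ hl).
      by rewrite mulr1.
    have hl : lin (fun z => S (s`_0 * z) * (s`_1 * S s`_2)) by lin_solve.
    by rewrite SD1E /= (lin_sum_pushZ (DH y) (fun p => eH p.2) (fun p => p.1) hl) (counitR hC).
  transitivity (SD DH 1 x (fun s => eH s`_1 *: S (s`_0 * y))).
    symmetry; apply: (SD_split1 hC (i := 1)) => //; first mlin_tac.
    case=> [|s0 [|s1 [|]]] //= _.
    have hl : lin (fun z => S (s0 * y) * z) by lin_solve.
    rewrite (SD_map DH 1 s1 (fun t => t`_0 * S t`_1) hl) antR (linZ _ _ hl).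
    by rewrite mulr1.
  have hl : lin (fun z => S (z * y)) by lin_solve.
  by rewrite SD1E /= (lin_sum_pushZ (DH x) (fun p => eH p.2) (fun p => p.1) hl) (counitR hC).
by rewrite -b a.
Qed.

Lemma eZ a u : eH (a *: u) = a * eH u.
Proof.
have e0 : eH 0 = 0.
  have := e_lin hC 1 0 0; rewrite scale1r addr0 mul1r => h.
  by apply: (addrI (eH 0)); rewrite -h addr0.
by have := e_lin hC a u 0; rewrite addr0 e0 addr0.
Qed.

Lemma eH_S x : eH (S x) = eH x.
Proof.
have h := antL x; rewrite SD1E /= in h.
have := congr1 eH h; rewrite eZ he1 mulr1 (e_sum hC) => <-.
transitivity (eH (S (\sum_(p <- DH x) eH p.2 *: p.1))); first by rewrite (counitR hC).
rewrite (lin_sum_push _ _ hS) (e_sum hC); apply: eq_bigr => p _.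
by rewrite (linZ _ _ hS) eZ hemul mulrC.
Qed.

Section Sinv.
Variable Sinv : H -> H.
Hypotheses (hSS : cancel S Sinv) (hSS' : cancel Sinv S).

Lemma lSinv : lin Sinv.
Proof.
move=> a x y; rewrite -{1}(hSS' x) -{1}(hSS' y) -hS; exact: hSS.
Qed.

Lemma Sinv_mul x y : Sinv (x * y) = Sinv y * Sinv x.
Proof. by rewrite -{1}(hSS' x) -{1}(hSS' y) -S_mul hSS. Qed.

Lemma Sinv1 : Sinv 1 = 1.
Proof. by rewrite -{1}S1 hSS. Qed.

Lemma eH_Sinv x : eH (Sinv x) = eH x.
Proof. by rewrite -{2}(hSS' x) eH_S. Qed.

Let lSi (U : lmodType R) (g : U -> H) : lin g -> lin (fun x => Sinv (g x)) := fun hg => lin_comp lSinv hg.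

Lemma SD_Sinv_anti W (F : seq H -> W) g : mlin 1 F ->
  SD DH 1 (Sinv g) F = SD DH 1 g (fun t => F [:: Sinv t`_1; Sinv t`_0]).
Proof.
move=> hF; have hF0 := mlin1_0 hF; have hF1 := mlin1_1 hF.
have := @SD_Santi W (fun t => F [:: Sinv t`_1; Sinv t`_0]) (Sinv g).
rewrite hSS' => ->; last mlin_tac.
by apply: SD_ext => -[|t0 [|t1 [|]]] //= _; rewrite !hSS.
Qed.

Lemma antSinv g : SD DH 1 g (fun t => Sinv t`_1 * t`_0) = eH g *: 1.
Proof.
have := congr1 Sinv (antL g).
rewrite -(SD_map DH 1 g (fun t => S t`_0 * t`_1) lSinv) (linZ _ _ lSinv) Sinv1 => <-.
by apply: SD_ext => t _; rewrite Sinv_mul hSS.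
Qed.

End Sinv.
End Hopf.


Section Main.
Variable R : comPzRingType.
Variable H : algType R.
Variables (DH : H -> seq (H * H)) (eH : H -> R) (S Sinv : H -> H).
Variables (C : lmodType R) (DC : C -> seq (C * C)) (eC : C -> R) (act : H -> C -> C).
Hypothesis hH : is_Hopf_algebra DH eH S.
Hypotheses (hSS : cancel S Sinv) (hSS' : cancel Sinv S).
Hypothesis hM : is_module_coalgebra DH eH DC eC act.
Implicit Types U W V : lmodType R.

Let hCH : is_coalgebra DH eH := proj1 hH.
Let hS := proj1 (proj2 (proj2 (proj2 (proj2 (proj2 hH))))).
Let hCC : is_coalgebra DC eC := proj1 hM.
Let hact : bilin act := proj1 (proj2 hM).
Let hact1 := proj1 (proj2 (proj2 hM)).
Let hactM := proj1 (proj2 (proj2 (proj2 hM))).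
Let hDact := proj1 (proj2 (proj2 (proj2 (proj2 hM)))).
Let heact := proj2 (proj2 (proj2 (proj2 (proj2 hM)))).

Let lS (U : lmodType R) (g : U -> H) : lin g -> lin (fun x => S (g x)) := fun hg => lin_comp hS hg.
Let lSi (U : lmodType R) (g : U -> H) : lin g -> lin (fun x => Sinv (g x)) := fun hg => lin_comp (lSinv hH hSS hSS') hg.
Let lSDH := lin_SDm hCH.
Let lSDC := lin_SDm hCC.
Let leH (U W : lmodType R) (g : U -> H) (v : W) : lin g -> lin (fun x => eH (g x) *: v).
Proof. move=> hg a x y; rewrite hg (e_lin hCH) scalerDl scalerA. by []. Qed.
Let leC (U W : lmodType R) (g : U -> C) (v : W) : lin g -> lin (fun x => eC (g x) *: v).
Proof. move=> hg a x y; rewrite hg (e_lin hCC) scalerDl scalerA. by []. Qed.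
Let lact1 (U : lmodType R) (g : U -> H) c : lin g -> lin (fun x => act (g x) c).
Proof. by move=> hg; apply: (lin_comp (f := fun h => act h c)) => //; case: hact. Qed.
Let lact2 (U : lmodType R) (g : U -> C) h : lin g -> lin (fun x => act h (g x)).
Proof. by move=> hg; apply: (lin_comp (f := act h)) => //; case: hact. Qed.

Lemma T_simpl u v : Sinv (u * S v) = v * Sinv u.
Proof. by rewrite (Sinv_mul hH hSS hSS') hSS. Qed.

Lemma Delta3E W (Psi : H * H * H * H -> W) g :
  \sum_(q <- Delta3 DH g) Psi q = SD DH 3 g (fun s => Psi (s`_0, s`_1, s`_2, s`_3)).
Proof.
rewrite /Delta3 big_flatten /= big_map SD_S; apply: eq_bigr => p _.
rewrite big_flatten /= big_map SD_S; apply: eq_bigr => q _.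
rewrite big_map SD_S; apply: eq_bigr => r _; by rewrite SD_0.
Qed.

Lemma SmashE W (Phi : (C * H) * (C * H) -> W) a g :
  \sum_(p <- smash_Delta DH S Sinv DC act a g) Phi p =
  SD DC 1 a (fun x => SD DH 3 g (fun q => Phi ((x`_0, q`_1), (act (q`_2 * Sinv q`_0) x`_1, q`_3)))).
Proof.
rewrite /smash_Delta big_allpairs_dep SD1E; apply: eq_bigr => x _.
rewrite Delta3E; apply: SD_ext => s _; by rewrite T_simpl.
Qed.

Lemma SD_act W (F : seq C -> W) h c : mlin 1 F ->
  SD DC 1 (act h c) F = SD DH 1 h (fun p => SD DC 1 c (fun q => F [:: act p`_0 q`_0; act p`_1 q`_1])).
Proof.
move=> hF; have bF : bilin (fun x y => F [:: x; y]).
  by split=> [y|x]; [apply: (hF [::] [:: y]) | apply: (hF [:: x] [::])].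
rewrite SD1E (hDact h c bF) big_allpairs_dep SD1E.
by apply: eq_bigr => p _; rewrite SD1E.
Qed.

Section Coassoc.
Variable W : lmodType R.
Variable K : C -> H -> C -> H -> C -> H -> W.
Hypothesis hK : hexalin K.
Let k1 (U : lmodType R) (g : U -> C) x2 x3 x4 x5 x6 : lin g -> lin (fun x => K (g x) x2 x3 x4 x5 x6).
Proof. by move=> hg; apply: (lin_comp (f := fun y => K y x2 x3 x4 x5 x6)) => //; case: hK. Qed.
Let k2 (U : lmodType R) (g : U -> H) x1 x3 x4 x5 x6 : lin g -> lin (fun x => K x1 (g x) x3 x4 x5 x6).
Proof. by move=> hg; apply: (lin_comp (f := fun y => K x1 y x3 x4 x5 x6)) => //; case: hK => _ []. Qed.
Let k3 (U : lmodType R) (g : U -> C) x1 x2 x4 x5 x6 : lin g -> lin (fun x => K x1 x2 (g x) x4 x5 x6).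
Proof. by move=> hg; apply: (lin_comp (f := fun y => K x1 x2 y x4 x5 x6)) => //; case: hK => _ [] _ []. Qed.
Let k4 (U : lmodType R) (g : U -> H) x1 x2 x3 x5 x6 : lin g -> lin (fun x => K x1 x2 x3 (g x) x5 x6).
Proof. by move=> hg; apply: (lin_comp (f := fun y => K x1 x2 x3 y x5 x6)) => //; case: hK => _ [] _ [] _ []. Qed.
Let k5 (U : lmodType R) (g : U -> C) x1 x2 x3 x4 x6 : lin g -> lin (fun x => K x1 x2 x3 x4 (g x) x6).
Proof. by move=> hg; apply: (lin_comp (f := fun y => K x1 x2 x3 x4 y x6)) => //; case: hK => _ [] _ [] _ [] _ []. Qed.
Let k6 (U : lmodType R) (g : U -> H) x1 x2 x3 x4 x5 : lin g -> lin (fun x => K x1 x2 x3 x4 x5 (g x)).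
Proof. by move=> hg; apply: (lin_comp (f := fun y => K x1 x2 x3 x4 x5 y)) => //; case: hK => _ [] _ [] _ [] _ []. Qed.

Definition NF a g := SD DC 2 a (fun x => SD DH 6 g (fun s =>
  K x`_0 s`_2 (act (s`_3 * Sinv s`_1) x`_1) s`_4 (act (s`_5 * Sinv s`_0) x`_2) s`_6)).

Lemma LHS_NF a g :
  SD DC 1 a (fun x => SD DH 3 g (fun q => SD DC 1 x`_0 (fun y => SD DH 3 q`_1 (fun r =>
     K y`_0 r`_1 (act (r`_2 * Sinv r`_0) y`_1) r`_3 (act (q`_2 * Sinv q`_0) x`_1) q`_3)))) = NF a g.
Proof.
transitivity (SD DC 1 a (fun x => SD DC 1 x`_0 (fun y => SD DH 3 g (fun q => SD DH 3 q`_1 (fun r =>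
     K y`_0 r`_1 (act (r`_2 * Sinv r`_0) y`_1) r`_3 (act (q`_2 * Sinv q`_0) x`_1) q`_3))))).
  by apply: SD_ext => x _; rewrite SD_swap.
transitivity (SD DC 2 a (fun x => SD DH 3 g (fun q => SD DH 3 q`_1 (fun r =>
     K x`_0 r`_1 (act (r`_2 * Sinv r`_0) x`_1) r`_3 (act (q`_2 * Sinv q`_0) x`_2) q`_3)))).
  apply: (SD_split1 hCC (i := 0)) => //; first mlin_tac.
  by case=> [|x0 [|x1 [|]]].
rewrite /NF; apply: SD_ext => x _.
transitivity (SD DH 4 g (fun s => SD DH 2 s`_2 (fun r =>
     K x`_0 r`_0 (act (r`_1 * Sinv s`_1) x`_1) r`_2 (act (s`_3 * Sinv s`_0) x`_2) s`_4))).
  apply: (SD_split1 hCH (i := 1)) => //; first mlin_tac.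
  case=> [|q0 [|q1 [|q2 [|q3 [|]]]]] //= _.
transitivity (SD DH 5 g (fun s => SD DH 1 s`_3 (fun r =>
     K x`_0 s`_2 (act (r`_0 * Sinv s`_1) x`_1) r`_1 (act (s`_4 * Sinv s`_0) x`_2) s`_5))).
  apply: (SD_split1 hCH (i := 2)) => //; first mlin_tac.
  case=> [|q0 [|q1 [|q2 [|q3 [|q4 [|]]]]]] //= _.
apply: (SD_split1 hCH (i := 3)) => //; first mlin_tac.
case=> [|q0 [|q1 [|q2 [|q3 [|q4 [|q5 [|]]]]]]] //= _.
Qed.

Lemma RHS_NF a g :
  SD DC 1 a (fun x => SD DH 3 g (fun q => SD DC 1 (act (q`_2 * Sinv q`_0) x`_1) (fun y =>
     SD DH 3 q`_3 (fun r => K x`_0 q`_1 y`_0 r`_1 (act (r`_2 * Sinv r`_0) y`_1) r`_3)))) = NF a g.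
Proof.
transitivity (SD DC 1 a (fun x => SD DC 1 x`_1 (fun z => SD DH 3 g (fun q => SD DH 1 q`_2 (fun p =>
   SD DH 1 q`_0 (fun t => SD DH 3 q`_3 (fun r =>
     K x`_0 q`_1 (act (p`_0 * Sinv t`_1) z`_0) r`_1 (act (r`_2 * Sinv r`_0) (act (p`_1 * Sinv t`_0) z`_1)) r`_3))))))).
  apply: SD_ext => x _.
  transitivity (SD DH 3 g (fun q => SD DH 1 q`_2 (fun p => SD DH 1 q`_0 (fun t => SD DC 1 x`_1 (fun z =>
     SD DH 3 q`_3 (fun r =>
     K x`_0 q`_1 (act (p`_0 * Sinv t`_1) z`_0) r`_1 (act (r`_2 * Sinv r`_0) (act (p`_1 * Sinv t`_0) z`_1)) r`_3)))))).
    apply: SD_ext => q _.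
    rewrite SD_act; last mlin_tac.
    rewrite (SD_mul hH); last mlin_tac.
    apply: SD_ext => p _.
    rewrite (SD_Sinv_anti hH hSS hSS'); last mlin_tac.
    by [].
  etransitivity; last exact: SD_swap.
  apply: SD_ext => q _.
  etransitivity; last exact: SD_swap.
  apply: SD_ext => p _; exact: SD_swap.
transitivity (SD DC 2 a (fun x => SD DH 3 g (fun q => SD DH 1 q`_2 (fun p =>
   SD DH 1 q`_0 (fun t => SD DH 3 q`_3 (fun r =>
     K x`_0 q`_1 (act (p`_0 * Sinv t`_1) x`_1) r`_1 (act (r`_2 * Sinv r`_0) (act (p`_1 * Sinv t`_0) x`_2)) r`_3)))))).
  apply: (SD_split1 hCC (i := 1)) => //; first mlin_tac.
  by case=> [|x0 [|x1 [|]]].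
rewrite /NF; apply: SD_ext => x _.
transitivity (SD DH 4 g (fun s => SD DH 1 s`_0 (fun t => SD DH 3 s`_4 (fun r =>
     K x`_0 s`_1 (act (s`_2 * Sinv t`_1) x`_1) r`_1 (act (r`_2 * Sinv r`_0) (act (s`_3 * Sinv t`_0) x`_2)) r`_3)))).
  apply: (SD_split1 hCH (i := 2)) => //; first mlin_tac.
  by case=> [|q0 [|q1 [|q2 [|q3 [|]]]]].
transitivity (SD DH 5 g (fun s => SD DH 3 s`_5 (fun r =>
     K x`_0 s`_2 (act (s`_3 * Sinv s`_1) x`_1) r`_1 (act (r`_2 * Sinv r`_0) (act (s`_4 * Sinv s`_0) x`_2)) r`_3))).
  apply: (SD_split1 hCH (i := 0)) => //; first mlin_tac.
  by case=> [|q0 [|q1 [|q2 [|q3 [|q4 [|]]]]]].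
transitivity (SD DH 6 g (fun s => SD DH 2 s`_6 (fun r =>
     K x`_0 s`_2 (act (s`_3 * Sinv s`_1) x`_1) r`_0 (act (r`_1 * Sinv s`_5) (act (s`_4 * Sinv s`_0) x`_2)) r`_2))).
  apply: (SD_split1 hCH (i := 5)) => //; first mlin_tac.
  by case=> [|q0 [|q1 [|q2 [|q3 [|q4 [|q5 [|]]]]]]].
transitivity (SD DH 7 g (fun s => SD DH 1 s`_7 (fun r =>
     K x`_0 s`_2 (act (s`_3 * Sinv s`_1) x`_1) s`_6 (act (r`_0 * Sinv s`_5) (act (s`_4 * Sinv s`_0) x`_2)) r`_1))).
  apply: (SD_split1 hCH (i := 6)) => //; first mlin_tac.
  by case=> [|q0 [|q1 [|q2 [|q3 [|q4 [|q5 [|q6 [|]]]]]]]].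
transitivity (SD DH 8 g (fun s =>
     K x`_0 s`_2 (act (s`_3 * Sinv s`_1) x`_1) s`_6 (act (s`_7 * Sinv s`_5) (act (s`_4 * Sinv s`_0) x`_2)) s`_8)).
  apply: (SD_split1 hCH (i := 7)) => //; first mlin_tac.
  by case=> [|q0 [|q1 [|q2 [|q3 [|q4 [|q5 [|q6 [|q7 [|]]]]]]]]].
transitivity (SD DH 7 g (fun s =>
     eH s`_4 *: K x`_0 s`_2 (act (s`_3 * Sinv s`_1) x`_1) s`_5 (act (s`_6 * Sinv s`_0) x`_2) s`_7)).
  symmetry; apply: (SD_split1 hCH (i := 4)) => //; first mlin_tac.
  case=> [|s0 [|s1 [|s2 [|s3 [|s4 [|s5 [|s6 [|s7 [|]]]]]]]]] //= _.
  have -> : SD DH 1 s4 (fun t => K x`_0 s2 (act (s3 * Sinv s1) x`_1) s5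
       (act (s6 * Sinv t`_1) (act (t`_0 * Sinv s0) x`_2)) s7)
     = SD DH 1 s4 (fun t => K x`_0 s2 (act (s3 * Sinv s1) x`_1) s5
       (act (s6 * (Sinv t`_1 * t`_0) * Sinv s0) x`_2) s7).
    by apply: SD_ext => t _; rewrite -hactM !mulrA.
  have hl : lin (fun z => K x`_0 s2 (act (s3 * Sinv s1) x`_1) s5 (act (s6 * z * Sinv s0) x`_2) s7).
    by lin_solve.
  rewrite (SD_map DH 1 s4 (fun t => Sinv t`_1 * t`_0) hl) (antSinv hH hSS hSS') (linZ _ _ hl).
  by rewrite mulr1.
symmetry; apply: (SD_split1 hCH (i := 4)) => //; first mlin_tac.
case=> [|s0 [|s1 [|s2 [|s3 [|s4 [|s5 [|s6 [|]]]]]]]] //= _.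
have hl : lin (fun z => K x`_0 s2 (act (s3 * Sinv s1) x`_1) z (act (s5 * Sinv s0) x`_2) s6).
  by lin_solve.
by rewrite SD1E /= (lin_sum_pushZ (DH s4) (fun p => eH p.1) (fun p => p.2) hl) (counitL hCH).
Qed.
Lemma coassoc_smash a g :
  \sum_(p <- smash_Delta DH S Sinv DC act a g)
     \sum_(q <- smash_Delta DH S Sinv DC act p.1.1 p.1.2) K q.1.1 q.1.2 q.2.1 q.2.2 p.2.1 p.2.2 =
  \sum_(p <- smash_Delta DH S Sinv DC act a g)
     \sum_(q <- smash_Delta DH S Sinv DC act p.2.1 p.2.2) K p.1.1 p.1.2 q.1.1 q.1.2 q.2.1 q.2.2.
Proof.
rewrite !SmashE.
transitivity (NF a g); [rewrite -LHS_NF | rewrite -RHS_NF];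
  apply: SD_ext => x _; apply: SD_ext => q _; by rewrite SmashE.
Qed.
End Coassoc.
Lemma antSinv2 g : SD DH 1 g (fun t => t`_1 * Sinv t`_0) = eH g *: 1.
Proof.
have lSv := lSinv hH hSS hSS'.
have := congr1 Sinv (antR hH g).
rewrite -(SD_map DH 1 g (fun t => t`_0 * S t`_1) lSv) (linZ _ _ lSv) (Sinv1 hH hSS) => <-.
by apply: SD_ext => t _; rewrite T_simpl.
Qed.

Section Bilin.
Variable W : lmodType R.
Variable f : C -> H -> W.
Hypothesis hf : bilin f.
Let f1 (U : lmodType R) (g : U -> C) h : lin g -> lin (fun x => f (g x) h).
Proof. by move=> hg; apply: (lin_comp (f := fun y => f y h)) => //; case: hf. Qed.
Let f2 (U : lmodType R) (g : U -> H) c : lin g -> lin (fun x => f c (g x)).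
Proof. by move=> hg; apply: (lin_comp (f := fun y => f c y)) => //; case: hf. Qed.

Lemma counit_left a g :
  \sum_(p <- smash_Delta DH S Sinv DC act a g) f ((eC p.1.1 * eH p.1.2) *: p.2.1) p.2.2 = f a g.
Proof.
rewrite SmashE /=.
transitivity (SD DC 1 a (fun x => eC x`_0 *: f x`_1 g)); last first.
  have hl : lin (fun z => f z g) by lin_solve.
  by rewrite SD1E /= (lin_sum_pushZ (DC a) (fun p => eC p.1) (fun p => p.2) hl) (counitL hCC).
apply: SD_ext => x _.
transitivity (eC x`_0 *: SD DH 3 g (fun q => eH q`_1 *: f (act (q`_2 * Sinv q`_0) x`_1) q`_3)).
  rewrite -SD_map; last exact: lin_scale.
  apply: SD_ext => q _.
  by rewrite (linZ _ _ (proj1 hf _)) scalerA.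
congr (_ *: _).
transitivity (SD DH 2 g (fun q => f (act (q`_1 * Sinv q`_0) x`_1) q`_2)).
  symmetry; apply: (SD_split1 hCH (i := 1)) => //; first mlin_tac.
  case=> [|s0 [|s1 [|s2 [|]]]] //= _.
  have hl : lin (fun z => f (act (z * Sinv s0) x`_1) s2) by lin_solve.
  by rewrite SD1E /= (lin_sum_pushZ (DH s1) (fun p => eH p.1) (fun p => p.2) hl) (counitL hCH).
transitivity (SD DH 1 g (fun q => eH q`_0 *: f x`_1 q`_1)).
  symmetry; apply: (SD_split1 hCH (i := 0)) => //; first mlin_tac.
  case=> [|s0 [|s1 [|]]] //= _.
  have hl : lin (fun z => f (act z x`_1) s1) by lin_solve.
  rewrite (SD_map DH 1 s0 (fun t => t`_1 * Sinv t`_0) hl) antSinv2 (linZ _ _ hl).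
  by rewrite hact1.
have hl : lin (fun z => f x`_1 z) by lin_solve.
by rewrite SD1E /= (lin_sum_pushZ (DH g) (fun p => eH p.1) (fun p => p.2) hl) (counitL hCH).
Qed.

Lemma counit_right a g :
  \sum_(p <- smash_Delta DH S Sinv DC act a g) f ((eC p.2.1 * eH p.2.2) *: p.1.1) p.1.2 = f a g.
Proof.
rewrite SmashE /=.
transitivity (SD DC 1 a (fun x => eC x`_1 *: f x`_0 g)); last first.
  have hl : lin (fun z => f z g) by lin_solve.
  by rewrite SD1E /= (lin_sum_pushZ (DC a) (fun p => eC p.2) (fun p => p.1) hl) (counitR hCC).
apply: SD_ext => x _.
transitivity (eC x`_1 *: SD DH 3 g (fun q => eH q`_0 *: (eH q`_2 *: (eH q`_3 *: f x`_0 q`_1)))).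
  rewrite -SD_map; last exact: lin_scale.
  apply: SD_ext => q _.
  rewrite (linZ _ _ (proj1 hf _)) !scalerA heact (proj1 (proj2 (proj2 (proj2 hH)))) (eH_Sinv hH hSS').
  by congr (_ *: _); congr (_ * _); rewrite mulrC [eH q`_2 * _]mulrC mulrA.
congr (_ *: _).
transitivity (SD DH 2 g (fun q => eH q`_0 *: (eH q`_2 *: f x`_0 q`_1))).
  symmetry; apply: (SD_split1 hCH (i := 2)) => //; first mlin_tac.
  case=> [|s0 [|s1 [|s2 [|]]]] //= _.
  have hl0 : lin (fun w : W => eH s0 *: w) by exact: lin_scale.
  have hl : lin (fun z => eH z *: f x`_0 s1) by lin_solve.
  rewrite (SD_map DH 1 s2 (fun t => eH t`_0 *: (eH t`_1 *: f x`_0 s1)) hl0).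
  by rewrite SD1E /= (lin_sum_pushZ (DH s2) (fun p => eH p.1) (fun p => p.2) hl) (counitL hCH).
transitivity (SD DH 1 g (fun q => eH q`_0 *: f x`_0 q`_1)).
  symmetry; apply: (SD_split1 hCH (i := 1)) => //; first mlin_tac.
  case=> [|s0 [|s1 [|]]] //= _.
  have hl0 : lin (fun w : W => eH s0 *: w) by exact: lin_scale.
  have hl : lin (fun z => f x`_0 z) by lin_solve.
  rewrite (SD_map DH 1 s1 (fun t => eH t`_1 *: f x`_0 t`_0) hl0).
  by rewrite SD1E /= (lin_sum_pushZ (DH s1) (fun p => eH p.2) (fun p => p.1) hl) (counitR hCH).
have hl : lin (fun z => f x`_0 z) by lin_solve.
by rewrite SD1E /= (lin_sum_pushZ (DH g) (fun p => eH p.1) (fun p => p.2) hl) (counitL hCH).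
Qed.
End Bilin.

Section Quad.
Variable W : lmodType R.
Variable f : C -> H -> C -> H -> W.
Hypothesis hf : quadlin f.
Let q1 (U : lmodType R) (g : U -> C) x2 x3 x4 : lin g -> lin (fun x => f (g x) x2 x3 x4).
Proof. by move=> hg; apply: (lin_comp (f := fun y => f y x2 x3 x4)) => //; case: hf. Qed.
Let q2 (U : lmodType R) (g : U -> H) x1 x3 x4 : lin g -> lin (fun x => f x1 (g x) x3 x4).
Proof. by move=> hg; apply: (lin_comp (f := fun y => f x1 y x3 x4)) => //; case: hf. Qed.
Let q3 (U : lmodType R) (g : U -> C) x1 x2 x4 : lin g -> lin (fun x => f x1 x2 (g x) x4).
Proof. by move=> hg; apply: (lin_comp (f := fun y => f x1 x2 y x4)) => //; case: hf. Qed.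
Let q4 (U : lmodType R) (g : U -> H) x1 x2 x3 : lin g -> lin (fun x => f x1 x2 x3 (g x)).
Proof. by move=> hg; apply: (lin_comp (f := fun y => f x1 x2 x3 y)) => //; case: hf. Qed.

Lemma lin_a r a a' g :
  \sum_(p <- smash_Delta DH S Sinv DC act (r *: a + a') g) f p.1.1 p.1.2 p.2.1 p.2.2 =
  r *: \sum_(p <- smash_Delta DH S Sinv DC act a g) f p.1.1 p.1.2 p.2.1 p.2.2 +
  \sum_(p <- smash_Delta DH S Sinv DC act a' g) f p.1.1 p.1.2 p.2.1 p.2.2.
Proof. rewrite !SmashE; apply: (SD_lin hCC); mlin_tac. Qed.

Lemma lin_g r a g g' :
  \sum_(p <- smash_Delta DH S Sinv DC act a (r *: g + g')) f p.1.1 p.1.2 p.2.1 p.2.2 =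
  r *: \sum_(p <- smash_Delta DH S Sinv DC act a g) f p.1.1 p.1.2 p.2.1 p.2.2 +
  \sum_(p <- smash_Delta DH S Sinv DC act a g') f p.1.1 p.1.2 p.2.1 p.2.2.
Proof.
rewrite !SmashE /=.
apply: (@SD_linf _ _ DC H W 1 a (fun t x => SD DH 3 t (fun q => f x`_0 q`_1 (act (q`_2 * Sinv q`_0) x`_1) q`_3))).
move=> x _; apply: (SD_lin hCH); mlin_tac.
Qed.

Lemma scale_first r (s : seq ((C * H) * (C * H))) :
  \sum_(p <- s) f (r *: p.1.1) p.1.2 p.2.1 p.2.2 = r *: \sum_(p <- s) f p.1.1 p.1.2 p.2.1 p.2.2.
Proof.
rewrite scaler_sumr; apply: eq_bigr => p _.
by rewrite (linZ _ _ (q1 p.1.2 p.2.1 p.2.2 (@lin_id _ _))).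
Qed.
End Quad.

End Main.

Unset Implicit Arguments. Set Strict Implicit. Set Printing Implicit Defensive.

Theorem mainTheorem2 (R : comPzRingType) (H : algType R)
  (DH : H -> seq (H * H)) (eH : H -> R) (S Sinv : H -> H)
  (C : lmodType R) (DC : C -> seq (C * C)) (eC : C -> R) (act : H -> C -> C) :
  is_Hopf_algebra DH eH S ->
  cancel S Sinv -> cancel Sinv S ->
  is_module_coalgebra DH eH DC eC act ->
  let D := smash_Delta DH S Sinv DC act in
  let eD := fun x : C * H => eC x.1 * eH x.2 in
  [/\ (* D is well defined as an R-linear map C (x) H -> (C (x) H) (x) (C (x) H) *)
      forall (r : R) (a a' : C) (g : H),
        eqT4 (map (@flat4 C H) (D (r *: a + a') g))
             (map (@flat4 C H) ([seq (r *: p.1.1, p.1.2, p.2) | p <- D a g] ++ D a' g)),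
      forall (r : R) (a : C) (g g' : H),
        eqT4 (map (@flat4 C H) (D a (r *: g + g')))
             (map (@flat4 C H) ([seq (r *: p.1.1, p.1.2, p.2) | p <- D a g] ++ D a g')),
      (* coassociativity *)
      forall (a : C) (g : H),
        eqT6 (flatten [seq [seq (q.1.1, q.1.2, q.2.1, q.2.2, p.2.1, p.2.2)
                           | q <- D p.1.1 p.1.2] | p <- D a g])
             (flatten [seq [seq (p.1.1, p.1.2, q.1.1, q.1.2, q.2.1, q.2.2)
                           | q <- D p.2.1 p.2.2] | p <- D a g]),
      (* left counit *)
      forall (a : C) (g : H),
        eqT2 [seq (eD p.1 *: p.2.1, p.2.2) | p <- D a g] [:: (a, g)] &
      (* right counit *)
      forall (a : C) (g : H),
        eqT2 [seq (eD p.2 *: p.1.1, p.1.2) | p <- D a g] [:: (a, g)]].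
Proof.
move=> hH hSS hSS' hM D eD; split.
- move=> r a a' g W f hf; rewrite !big_map big_cat big_map /= /D.
  by rewrite (lin_a hH hSS hSS' hM hf) (scale_first hf).
- move=> r a g g' W f hf; rewrite !big_map big_cat big_map /= /D.
  by rewrite (lin_g hH hSS hSS' hM hf) (scale_first hf).
- move=> a g W K hK; rewrite !big_flatten /= !big_map.
  under eq_bigr do rewrite big_map.
  under [RHS]eq_bigr do rewrite big_map.
  exact: (coassoc_smash hH hSS hSS' hM hK).
- move=> a g W f hf; rewrite big_map big_seq1.
  exact: (counit_left hH hSS hSS' hM hf).
- move=> a g W f hf; rewrite big_map big_seq1.
  exact: (counit_right hH hSS hSS' hM hf).
Qed.
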